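(* Let $\Gamma$ be a finite Abelian group, $S$ a symmetric multiset of elements of $\Gamma$ with $|S|=d$, and $G=\mathrm{Cay}(\Gamma,S)$. Then for every integer $t\ge0$, $$\frac{\mathrm{CP}_t}{\mathrm{CP}_{2t}} \le (2e)^{4d}.$$
   Context: A multiset $S$ of elements of $\Gamma$ is symmetric if $x$ and $-x$ have equal multiplicity for all $x$; $\mathrm{Cay}(\Gamma,S)$ has vertex set $\Gamma$ and an edge $(v,v+s)$ for every $v$ and every element $s$ of $S$ (with multiplicity). With $\mathbf{A}$ the normalized adjacency matrix of $G$ (here $\mathbf{A}=\frac1d\times$ the adjacency matrix), $\mathrm{CP}_t=\|(\tfrac12I+\tfrac12\mathbf{A})^te_0\|_2^2$ is the $t$-step lazy collision probability from the identity $0\in\Gamma$. *)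

(* Defs.v *)
From mathcomp Require Import all_boot all_order all_algebra.
From mathcomp Require Import all_classical all_reals all_analysis.
Set Implicit Arguments. Unset Strict Implicit. Unset Printing Implicit Defensive.
Import Order.TTheory GRing.Theory Num.Theory.
Local Open Scope ring_scope.

(* A multiset S of elements of Gamma, represented as a sequence (order
   irrelevant, multiplicities = count_mem). *)
Definition symmetric_mset (G : finZmodType) (S : seq G) : Prop :=
  forall x : G, count_mem x S = count_mem (- x) S.

(* Normalized adjacency operator of Cay(Gamma,S), d = |S|, acting on vectors
   f : Gamma -> R: (A f)(u) = (1/d) * sum_{s in S (with mult.)} f (u + s),
   i.e. the matrix-vector product with (1/d) * adjacency matrix, whose (u,v)
   entry counts the s in S with v = u + s. *)
Definition cay_adj (R : realType) (G : finZmodType) (S : seq G)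
    (f : G -> R) : G -> R :=
  fun u => (size S)%:R^-1 * \sum_(s <- S) f (u + s).

Definition lazy_op (R : realType) (G : finZmodType) (S : seq G)
    (f : G -> R) : G -> R :=
  fun u => 2^-1 * f u + 2^-1 * cay_adj S f u.

Definition e0 (R : realType) (G : finZmodType) : G -> R :=
  fun u => if u == 0 then 1 else 0.

Definition CP (R : realType) (G : finZmodType) (S : seq G) (t : nat) : R :=
  \sum_(x : G) (iter t (lazy_op S) (@e0 R G) x) ^+ 2.

(* Main.v *)
Require Import Defs.
From HB Require Import structures.
From mathcomp Require Import all_boot all_order all_algebra.
From mathcomp Require Import all_classical all_reals all_analysis.
From mathcomp Require Import ring lra zify.
Set Implicit Arguments. Unset Strict Implicit. Unset Printing Implicit Defensive.
Import Order.TTheory GRing.Theory Num.Theory.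
Local Open Scope ring_scope.

Section GAlg.
Variables (R : realType) (G : finZmodType).
Definition galg := {ffun G -> R}.
HB.instance Definition _ := GRing.Lmodule.on galg.

Definition gone : galg := [ffun x => (x == 0)%:R].
Definition gmul (f g : galg) : galg := [ffun x => \sum_y f y * g (x - y)].

Lemma gmulC : commutative gmul.
Proof.
move=> f g; apply/ffunP => x; rewrite !ffunE.
rewrite (reindex_inj (@subrI _ x)) /=.
by apply: eq_bigr => y _; rewrite subKr mulrC.
Qed.

Lemma gmul1 : left_id gone gmul.
Proof.
move=> f; apply/ffunP => x; rewrite !ffunE (bigD1 0) //= big1 ?addr0.
  by rewrite ffunE eqxx mul1r subr0.
by move=> y /negPf hy; rewrite ffunE hy mul0r.
Qed.

Lemma gmulDl : left_distributive gmul +%R.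
Proof.
move=> f g h; apply/ffunP => x; rewrite !ffunE -big_split /=.
by apply: eq_bigr => y _; rewrite !ffunE mulrDl.
Qed.

Lemma gmulA : associative gmul.
Proof.
move=> f g h; apply/ffunP => x; rewrite !ffunE.
under eq_bigr do rewrite ffunE big_distrr /=.
under [RHS]eq_bigr do rewrite ffunE big_distrl /=.
rewrite [RHS]exchange_big /=.
apply: eq_bigr => z _.
rewrite [RHS](reindex_inj (addrI z)) /=.
apply: eq_bigr => w _; rewrite mulrA; congr (_ * g _ * h _).
  by rewrite (addrC z) addrK.
by rewrite opprD addrA.
Qed.

Lemma gone_neq0 : gone != 0.
Proof. apply/eqP => /ffunP /(_ 0); rewrite !ffunE eqxx => /eqP; by rewrite oner_eq0. Qed.

HB.instance Definition _ := GRing.Zmodule_isComNzRing.Build galg gmulA gmulC gmul1 gmulDl gone_neq0.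

Lemma gscaleAl (a : R) (u v : galg) : a *: (u * v) = (a *: u) * v.
Proof.
apply/ffunP => x; rewrite !ffunE scaler_sumr.
by apply: eq_bigr => y _; rewrite !ffunE; apply: mulrA.
Qed.
HB.instance Definition _ := GRing.Lmodule_isLalgebra.Build R galg gscaleAl.
HB.instance Definition _ := GRing.Lalgebra_isComAlgebra.Build R galg.

Lemma gmulE (f g : galg) x : (f * g) x = \sum_y f y * g (x - y).
Proof. by rewrite /GRing.mul /= ffunE. Qed.
Lemma goneE x : (1 : galg) x = (x == 0)%:R.
Proof. by rewrite /GRing.one /= ffunE. Qed.


Lemma gscaleE (a : R) (f : galg) x : (a *: f) x = a * f x.
Proof. by rewrite /GRing.scale /= ffunE. Qed.
Lemma gaddE (f g : galg) x : (f + g) x = f x + g x.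
Proof. by rewrite /GRing.add /= ffunE. Qed.
Lemma goppE (f : galg) x : (- f) x = - f x.
Proof. by rewrite /GRing.opp /= ffunE. Qed.
Lemma gsubE (f g : galg) x : (f - g) x = f x - g x.
Proof. by rewrite gaddE goppE. Qed.
Lemma gzeroE x : (0 : galg) x = 0.
Proof. by rewrite /GRing.zero /= ffunE. Qed.
Lemma gnatE (f : galg) n x : (f *+ n) x = f x *+ n.
Proof. elim: n => [|n IH]; by rewrite ?mulr0n ?gzeroE // !mulrS gaddE IH. Qed.
Lemma gsumE I (r : seq I) (P : pred I) (F : I -> galg) x :
  (\sum_(i <- r | P i) F i) x = \sum_(i <- r | P i) F i x.
Proof.
elim: r => [|a r IH]; first by rewrite !big_nil gzeroE.
rewrite !big_cons; case: (P a) => //; by rewrite gaddE IH.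
Qed.

Definition nng (f : galg) := forall x, 0 <= f x.
Definition gle (f g : galg) := nng (g - f).

Lemma nng0 : nng 0. Proof. by move=> x; rewrite gzeroE. Qed.
Lemma nng1 : nng 1. Proof. by move=> x; rewrite goneE ler0n. Qed.
Lemma nngD f g : nng f -> nng g -> nng (f + g).
Proof. by move=> hf hg x; rewrite gaddE addr_ge0. Qed.
Lemma nngM f g : nng f -> nng g -> nng (f * g).
Proof. by move=> hf hg x; rewrite gmulE sumr_ge0 // => y _; rewrite mulr_ge0. Qed.
Lemma nngZ a f : 0 <= a -> nng f -> nng (a *: f).
Proof. by move=> ha hf x; rewrite gscaleE mulr_ge0. Qed.
Lemma nngMn f n : nng f -> nng (f *+ n).
Proof. by move=> hf x; rewrite gnatE mulrn_wge0. Qed.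
Lemma nngX f n : nng f -> nng (f ^+ n).
Proof. move=> hf; elim: n => [|n IH]; first by rewrite expr0; exact: nng1. by rewrite exprS; apply: nngM. Qed.
Lemma nng_sum I (r : seq I) (P : pred I) (F : I -> galg) :
  (forall i, P i -> nng (F i)) -> nng (\sum_(i <- r | P i) F i).
Proof. by move=> h x; rewrite gsumE sumr_ge0 // => i /h. Qed.

Lemma gle_refl f : gle f f. Proof. by rewrite /gle subrr; exact: nng0. Qed.
Lemma gle_trans f g h : gle f g -> gle g h -> gle f h.
Proof. by move=> h1 h2; rewrite /gle -(subrK g h) -addrA; apply: nngD. Qed.
Lemma gleD f1 f2 g1 g2 : gle f1 g1 -> gle f2 g2 -> gle (f1 + f2) (g1 + g2).
Proof. by move=> h1 h2; rewrite /gle opprD addrACA; apply: nngD. Qed.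
Lemma gleMr f g h : gle f g -> nng h -> gle (f * h) (g * h).
Proof. by move=> h1 h2; rewrite /gle -mulrBl; apply: nngM. Qed.
Lemma gleZ a f g : 0 <= a -> gle f g -> gle (a *: f) (a *: g).
Proof. by move=> ha h; rewrite /gle -scalerBr; apply: nngZ. Qed.
Lemma gleMn f g n : gle f g -> gle (f *+ n) (g *+ n).
Proof. by move=> h; rewrite /gle -mulrnBl; apply: nngMn. Qed.
Lemma gle_sum I (r : seq I) (P : pred I) (F F' : I -> galg) :
  (forall i, P i -> gle (F i) (F' i)) ->
  gle (\sum_(i <- r | P i) F i) (\sum_(i <- r | P i) F' i).
Proof. by move=> h; rewrite /gle -sumrB; apply: nng_sum. Qed.
Lemma gle_addr f g : nng g -> gle f (f + g).
Proof. by move=> h; rewrite /gle addrC addKr. Qed.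
Lemma gleE f g : gle f g -> forall x, f x <= g x.
Proof. by move=> h x; have := h x; rewrite gsubE subr_ge0. Qed.

Lemma gmulnZ (f : galg) n : f *+ n = (n%:R : R) *: f.
Proof. by rewrite scaler_nat. Qed.
End GAlg.


Section Comp.
Variables (R : realType) (G : finZmodType).
Local Notation galg := (galg R G).

Definition Hp (X : galg) (r : nat) :=
  forall n, gle (X ^+ n *+ n.+1) (X ^+ n.+1 *+ (n.+1 + r)).

Lemma Hcomp (A B : galg) r1 r2 (p q : R) :
  nng A -> nng B -> 0 <= p -> 0 <= q -> p + q = 1 -> Hp A r1 -> Hp B r2 ->
  Hp (p *: A + q *: B) (r1 + r2).
Proof.
move=> nA nB p0 q0 pq HA HB n.
pose t m i := ((p ^+ (m - i) * q ^+ i) *: (A ^+ (m - i) * B ^+ i)) *+ 'C(m, i).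
have Yn m : (p *: A + q *: B) ^+ m = \sum_(i < m.+1) t m i.
  rewrite exprDn; apply: eq_bigr => i _.
  by rewrite /t !exprZn -scalerAl -scalerAr scalerA.
have nt m i : nng (t m i).
  by apply/nngMn/nngZ; [rewrite mulr_ge0 // exprn_ge0 | apply/nngM; apply/nngX].
have K1 i : (i <= n)%N ->
    gle ((p *: t n i) *+ n.+1) (t n.+1 i *+ ((n - i).+1 + r1)).
  move=> hi; have hj : (n.+1 - i = (n - i).+1)%N by rewrite subSn.
  rewrite /t hj; set j := (n - i)%N.
  have eb : ('C(n, i) * n.+1 = 'C(n.+1, i) * j.+1)%N.
    by rewrite mulnC (mul_bin_down n.+1 i) hj mulnC.
  have h := gleMn 'C(n.+1, i) (gleZ (mulr_ge0 (exprn_ge0 j.+1 p0) (exprn_ge0 i q0)) (gleMr (HA j) (nngX i nB))).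
  move: h; rewrite !gmulnZ !scalerA -!scalerAl !scalerA.
  have eb' : ('C(n, i)%:R * n.+1%:R = 'C(n.+1, i)%:R * j.+1%:R :> R)
    by rewrite -!natrM eb.
  have e1 : n.+1%:R * p * 'C(n, i)%:R * (p ^+ j * q ^+ i) =
     'C(n.+1, i)%:R * (p ^+ j.+1 * q ^+ i) * j.+1%:R :> R.
    transitivity (('C(n,i)%:R * n.+1%:R) * (p * (p^+j*q^+i)) : R); first ring.
    by rewrite eb' exprS; ring.
  have e2 : (j.+1 + r1)%:R * 'C(n.+1, i)%:R * (p ^+ j.+1 * q ^+ i) =
     'C(n.+1, i)%:R * (p ^+ j.+1 * q ^+ i) * (j.+1 + r1)%:R :> R by ring.
  by rewrite e1 e2.
have K2 i : (i <= n)%N ->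
    gle ((q *: t n i) *+ n.+1) (t n.+1 i.+1 *+ (i.+1 + r2)).
  move=> hi; rewrite /t subSS; set j := (n - i)%N.
  have eb : ('C(n, i) * n.+1 = 'C(n.+1, i.+1) * i.+1)%N.
    by rewrite mulnC (mul_bin_diag n.+1 i) mulnC.
  have h := gleMn 'C(n.+1, i.+1) (gleZ (mulr_ge0 (exprn_ge0 j p0) (exprn_ge0 i.+1 q0)) (gleMr (HB i) (nngX j nA))).
  move: h; rewrite !gmulnZ !scalerA -!scalerAl !scalerA.
  rewrite [B ^+ i * _]mulrC [B ^+ i.+1 * _]mulrC.
  have eb' : ('C(n, i)%:R * n.+1%:R = 'C(n.+1, i.+1)%:R * i.+1%:R :> R)
    by rewrite -!natrM eb.
  have e1 : n.+1%:R * q * 'C(n, i)%:R * (p ^+ j * q ^+ i) =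
     'C(n.+1, i.+1)%:R * (p ^+ j * q ^+ i.+1) * i.+1%:R :> R.
    transitivity (('C(n,i)%:R * n.+1%:R) * (q * (p^+j*q^+i)) : R); first ring.
    by rewrite eb' exprS; ring.
  have e2 : (i.+1 + r2)%:R * 'C(n.+1, i.+1)%:R * (p ^+ j * q ^+ i.+1) =
     'C(n.+1, i.+1)%:R * (p ^+ j * q ^+ i.+1) * (i.+1 + r2)%:R :> R by ring.
  by rewrite e1 e2.
rewrite !Yn -!sumrMnl.
apply: (@gle_trans _ _ _ (\sum_(i < n.+1) (t n.+1 i *+ ((n - i).+1 + r1) + t n.+1 i.+1 *+ (i.+1 + r2)))).
  apply: gle_sum => i _.
  rewrite -{1}[t n i]scale1r -pq scalerDl mulrnDl.
  by apply: gleD; [apply: K1 | apply: K2]; rewrite -ltnS.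
rewrite (eq_bigr (fun i : 'I_n.+2 => t n.+1 i *+ ((n.+1 - i) + r1) + t n.+1 i *+ (i + r2))); last first.
  move=> i _; rewrite -mulrnDr; congr (_ *+ _).
  have := ltn_ord i; rewrite ltnS => hi.
  by rewrite addnACA subnK.
rewrite !big_split /=; apply: gleD.
  rewrite [\sum_(i < n.+2) _]big_ord_recr /=.
  refine (gle_trans _ (gle_addr _ (nngMn _ (nt _ _)))).
  rewrite [X in gle _ X](eq_bigr (fun i : 'I_n.+1 => t n.+1 i *+ ((n - i).+1 + r1))); first exact: gle_refl.
  by move=> i _; rewrite subSn // -ltnS.
rewrite [\sum_(i < n.+2) _]big_ord_recl /= addrC.
refine (gle_trans _ (gle_addr _ (nngMn _ (nt _ _)))).
exact: gle_refl.
Qed.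
End Comp.


Lemma binineq n k : (k <= n.*2)%N ->
  (4 * n.+1 * 'C(n.*2, k) <= n.+2 * 'C(n.*2.+2, k.+1))%N.
Proof.
move=> hk.
have e1 := mul_bin_diag n.*2.+2 k.
have e2 := mul_bin_down n.*2.+1 k.
rewrite /= in e1 e2.
set a := 'C(n.*2, k) in e2 *; set b := 'C(n.*2.+1, k) in e1 e2; set c := 'C(n.*2.+2, k.+1) in e1 *.
set m := (n.*2.+1 - k)%N in e2.
have hm : (m + k = n.*2.+1)%N by rewrite /m subnK // ltnW // ltnS.
have hpos : (0 < k.+1 * m)%N by rewrite muln_gt0 /= /m subn_gt0 ltnS.
rewrite -(leq_pmul2r hpos).
have -> : (n.+2 * c * (k.+1 * m) = n.+2 * n.*2.+2 * n.*2.+1 * a)%N.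
  transitivity (n.+2 * (k.+1 * c) * m)%N; first ring.
  rewrite -e1; transitivity (n.+2 * n.*2.+2 * (m * b))%N; first ring.
  rewrite -e2; ring.
have : (2 * (k.+1 * m) <= n.+2 * n.*2.+1)%N.
  rewrite -!muln2 in hm *.
  have : (0 <= (k.+1%:Z - m%:Z) ^+ 2)%R by exact: sqr_ge0.
  nia.
move=> h.
have h2 := leq_mul (leqnn (2 * n.+1 * a)) h.
apply: leq_trans (leq_trans _ h2) _.
  by rewrite leq_eqVlt; apply/orP; left; apply/eqP; ring.
by rewrite leq_eqVlt; apply/orP; left; apply/eqP; rewrite -!muln2; ring.
Qed.

Section Delta.
Variables (R : realType) (G : finZmodType).
Local Notation galg := (galg R G).

Definition dl (u : G) : galg := [ffun x => (x == u)%:R].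
Lemma dlE u x : dl u x = (x == u)%:R. Proof. by rewrite ffunE. Qed.
Lemma dl0 : dl 0 = 1. Proof. by apply/ffunP => x; rewrite dlE. Qed.
Lemma nng_dl u : nng (dl u). Proof. by move=> x; rewrite dlE ler0n. Qed.
Lemma dlM u v : dl u * dl v = dl (u + v).
Proof.
apply/ffunP => x; rewrite gmulE dlE (bigD1 u) //= big1 ?addr0.
  by rewrite !dlE eqxx mul1r subr_eq addrC.
by move=> y hy; rewrite dlE (negPf hy) mul0r.
Qed.
Lemma dlX u k : dl u ^+ k = dl (u *+ k).
Proof. elim: k => [|k IH]; first by rewrite expr0 mulr0n dl0. by rewrite exprS IH dlM mulrS. Qed.
Lemma dl_conv u (f : galg) x : (dl u * f) x = f (x - u).
Proof.
rewrite gmulE (bigD1 u) //= big1 ?addr0; first by rewrite dlE eqxx mul1r.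
by move=> y hy; rewrite dlE (negPf hy) mul0r.
Qed.

Definition bs (s : G) : galg := 4^-1 *: (dl (- s) * (1 + dl s) ^+ 2).

Lemma bsE s : bs s = 2^-1 *: 1 + 4^-1 *: (dl s + dl (- s)).
Proof.
have e : dl (- s) * (1 + dl s) ^+ 2 = 1 *+ 2 + (dl s + dl (- s)).
  rewrite sqrrD expr1n mul1r dlX !mulrDr mulr1 !dlM addNr dl0 mulr2n addKr; ring.
rewrite /bs e scalerDr gmulnZ scalerA; congr (_ *: _ + _).
by field.
Qed.

Definition cf (n k : nat) : R := 'C(n.*2, k)%:R / 4 ^+ n.

Lemma bsX s n : bs s ^+ n = \sum_(k < n.*2.+1) cf n k *: dl (s *+ k - s *+ n).
Proof.
rewrite /bs exprZn exprMn dlX -exprM exprDn -muln2 mulnC big_distrr scaler_sumr.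
apply: eq_bigr => k _.
rewrite expr1n mul1r dlX.
rewrite [X in _ *: X](_ : _ = (dl (- s *+ n) * dl (s *+ k)) *+ 'C(n*2,k)); last exact: mulrnAr.
rewrite dlM gmulnZ scalerA; congr (_ *: dl _).
  by rewrite /cf exprVn mulrC -muln2.
by rewrite addrC mulNrn.
Qed.

Lemma nng_bs s : nng (bs s).
Proof. by apply: nngZ; [rewrite invr_ge0 ler0n | apply/nngM; [apply: nng_dl | apply/nngX/nngD; [apply: nng1|apply: nng_dl]]]. Qed.

Lemma gleZl (a b : R) (D : galg) : a <= b -> nng D -> gle (a *: D) (b *: D).
Proof. by move=> hab hD; rewrite /gle -scalerBl; apply: nngZ; rewrite // subr_ge0. Qed.

Lemma cf_ge0 n k : 0 <= cf n k.
Proof. by rewrite /cf divr_ge0 // exprn_ge0. Qed.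

Lemma cf_ineq n k : (k <= n.*2)%N -> n.+1%:R * cf n k <= n.+2%:R * cf n.+1 k.+1.
Proof.
move=> hk; have h := binineq hk.
have h' : (4 * n.+1 * 'C(n.*2, k))%:R <= (n.+2 * 'C(n.*2.+2, k.+1))%:R :> R by rewrite ler_nat.
rewrite !natrM in h'.
rewrite /cf /= exprS.
set x := 4 ^+ n : R.
have xp : 0 < x by rewrite exprn_gt0.
rewrite invfM.
set a := 'C(n.*2, k)%:R in h' *; set c := 'C(n.*2.+2, k.+1)%:R in h' *.
have hx : 0 < x^-1 by rewrite invr_gt0.
have e4 : (4 : R)^-1 * 4 = 1 by rewrite mulVf.
nra.
Qed.

Lemma gle_sum_shift m (F G' : nat -> galg) :
  (forall k, (k < m)%N -> gle (G' k) (F k.+1)) -> (forall k, nng (F k)) ->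
  gle (\sum_(k < m) G' k) (\sum_(k < m.+2) F k).
Proof.
move=> h nF.
rewrite big_ord_recl big_ord_recr /=.
set S1 := \sum_(i < m) F (bump 0 i).
have h1 : gle (\sum_(k < m) G' k) S1 by refine (gle_sum _ (fun k _ => _)); exact: h.
have h2 : gle S1 (S1 + F (bump 0 m)) := gle_addr _ (nF _).
have h3 : gle (S1 + F (bump 0 m)) (F 0%N + (S1 + F (bump 0 m))).
  by rewrite [X in gle _ X]addrC; exact: gle_addr _ (nF _).
exact: gle_trans (gle_trans h1 h2) h3.
Qed.

Lemma Hbs s : Hp (bs s) 1.
Proof.
move=> n; rewrite !bsX -!sumrMnl.
refine (gle_sum_shift (F := fun k => (cf n.+1 k *: dl (s *+ k - s *+ n.+1)) *+ (n.+1 + 1)) (G' := fun k => (cf n k *: dl (s *+ k - s *+ n)) *+ n.+1) _ _).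
  move=> k hk; rewrite !gmulnZ !scalerA.
  have -> : s *+ k.+1 - s *+ n.+1 = s *+ k - s *+ n.
    by rewrite !mulrS opprD addrACA subrr add0r.
  apply: gleZl; last exact: nng_dl.
  rewrite addn1.
  by apply: cf_ineq; rewrite -ltnS.
by move=> k; apply: nngMn; apply: nngZ; [apply: cf_ge0| apply: nng_dl].
Qed.
End Delta.


Lemma bin_double t r : ('C(t + t + r, t + t) <= 2 ^ r * 'C(t + r, t))%N.
Proof.
elim: r => [|r IH]; first by rewrite !addn0 !binn.
have e1 := mul_bin_down (t + t + r.+1) (t + t).
have e2 := mul_bin_down (t + r.+1) t.
rewrite /= !addnS /= in e1 e2.
rewrite -!addnS in e1 e2.
have d1 : (t + t + r.+1 - (t + t) = r.+1)%N by rewrite addKn.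
have d2 : (t + r.+1 - t = r.+1)%N by rewrite addKn.
rewrite d1 in e1; rewrite d2 in e2.
rewrite -(leq_pmul2l (ltn0Sn r)) -e1.
have -> : (r.+1 * (2 ^ r.+1 * 'C(t + r.+1, t)) = 2 ^ r.+1 * (r.+1 * 'C(t + r.+1, t)))%N by ring.
rewrite -e2 !addnS.
have h := leq_mul (leqnn (t + t + r).+1) IH.
apply: leq_trans h _.
rewrite expnS.
have : ((t + t + r).+1 <= 2 * (t + r).+1)%N by lia.
move=> h2.
have := leq_mul h2 (leqnn (2 ^ r * 'C(t + r, t))).
move=> h3; apply: leq_trans h3 _.
by rewrite leq_eqVlt; apply/orP; left; apply/eqP; ring.
Qed.

Section Main.
Variables (R : realType) (G : finZmodType).
Local Notation galg := (galg R G).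

Lemma gle_cancel (f g : galg) m : gle (f *+ m.+1) (g *+ m.+1) -> gle f g.
Proof.
move=> h x; have := h x; rewrite gsubE !gnatE -mulrnBl pmulrn_lge0 //.
by rewrite gsubE.
Qed.

Lemma Hmono (X : galg) r : Hp X r ->
  forall n, gle (X ^+ n *+ 'C(n + r, n)) (X ^+ n.+1 *+ 'C(n.+1 + r, n.+1)).
Proof.
move=> H n; apply: (@gle_cancel _ _ n).
rewrite -!mulrnA.
have e := mul_bin_diag (n.+1 + r) n.
rewrite /= in e.
rewrite (mulnC 'C(n.+1 + r, n.+1)) -e (mulnC 'C(n + r, n)) !mulrnA.
exact: gleMn.
Qed.

Lemma Hdouble (X : galg) r : nng X -> Hp X r ->
  forall t x, (X ^+ t) x <= (2 ^ r)%:R * (X ^+ (t + t)) x.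
Proof.
move=> nX H t x.
have mono j : gle (X ^+ t *+ 'C(t + r, t)) (X ^+ (t + j) *+ 'C(t + j + r, t + j)).
  elim: j => [|j IH]; first by rewrite addn0; exact: gle_refl.
  by rewrite addnS; exact: gle_trans IH (Hmono H _).
have h := gleE (mono t) x; rewrite !gnatE in h.
rewrite -[(X ^+ t) x *+ _]mulr_natr -[(X ^+ (t + t)) x *+ _]mulr_natr in h.
have hb := bin_double t r.
have hb' : 'C(t + t + r, t + t)%:R <= (2 ^ r)%:R * 'C(t + r, t)%:R :> R by rewrite -natrM ler_nat.
have b0 : 0 <= (X ^+ (t + t)) x by apply: nngX.
have c1 : 0 < 'C(t + r, t)%:R :> R by rewrite ltr0n bin_gt0 leq_addr.
set a := (X ^+ t) x in h *; set b := (X ^+ (t + t)) x in h b0 *.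
set c := 'C(t + r, t)%:R in h hb' c1 *; set c' := 'C(t + t + r, t + t)%:R in h hb' *.
set k := (2 ^ r)%:R in hb' *.
rewrite -(ler_pM2r c1).
apply: le_trans h _.
by rewrite (mulrC k) -mulrA ler_wpM2l.
Qed.

End Main.


Section Final.
Variables (R : realType) (G : finZmodType).
Local Notation galg := (galg R G).

Definition nu (S : seq G) : galg := (size S)%:R^-1 *: \sum_(s <- S) bs R s.

Lemma nng_nu S : nng (nu S).
Proof.
apply: nngZ; first by rewrite invr_ge0 ler0n.
by apply: nng_sum => s _; apply: nng_bs.
Qed.

Lemma Hnu S : S != [::] -> Hp (nu S) (size S).
Proof.
elim: S => [//|s S IH] _.
case: S IH => [|s' S'] IH.
  rewrite /nu big_cons big_nil addr0 /= invr1 scale1r; exact: Hbs.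
set S := s' :: S' in IH *.
have hS : S != [::] by [].
set k := size S.
have kp : (0 < k)%N by [].
have k0 : k%:R != 0 :> R by rewrite pnatr_eq0 -lt0n.
have k10 : k.+1%:R != 0 :> R by rewrite pnatr_eq0.
have -> : nu (s :: S) = k.+1%:R^-1 *: bs R s + (k%:R / k.+1%:R) *: nu S.
  rewrite /nu big_cons scalerDr scalerA; congr (_ + _ *: _).
  have -> : size (s :: S) = k.+1 by [].
  by rewrite mulrAC divff // mul1r.
have := @Hcomp R G (bs R s) (nu S) 1 k (k.+1%:R^-1) (k%:R / k.+1%:R) (nng_bs _ s) (nng_nu S).
apply.
- by rewrite invr_ge0 ler0n.
- by rewrite divr_ge0 ?ler0n.
- by field.
- exact: Hbs.
- exact: IH.
Qed.

Lemma sum_opp (S : seq G) (F : G -> R) : symmetric_mset S ->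
  \sum_(s <- S) F (- s) = \sum_(s <- S) F s.
Proof.
move=> hS; rewrite -(big_map (fun s => - s) predT F).
apply: perm_big; apply/allP => x _ /=.
rewrite count_map (hS x).
apply/eqP; apply: eq_count => y /=.
by rewrite eqr_oppLR.
Qed.

Lemma sum_cst (S : seq G) (a : R) : \sum_(s <- S) a = a *+ size S.
Proof. by elim: S => [|s S IH]; rewrite ?big_nil ?big_cons ?IH ?mulrS. Qed.

Lemma lazy_nu (S : seq G) (f : G -> R) u : symmetric_mset S -> (0 < size S)%N ->
  lazy_op S f u = (nu S * [ffun y => f y]) u.
Proof.
move=> hS hd.
rewrite /nu -scalerAl gscaleE mulr_suml gsumE.
under eq_bigr do rewrite bsE mulrDl -!scalerAl mul1r mulrDl gaddE !gscaleE gaddE !dl_conv !ffunE opprK.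
rewrite big_split /= sum_cst -big_distrr /= big_split /=.
rewrite (sum_opp (fun s => f (u + s)) hS).
rewrite /lazy_op /cay_adj.
have d0 : (size S)%:R != 0 :> R by rewrite pnatr_eq0 -lt0n.
rewrite -mulr_natr.
field.
by rewrite pnatr_eq0 -lt0n.
Qed.

Lemma iter_nu (S : seq G) t : symmetric_mset S -> (0 < size S)%N ->
  forall x, iter t (lazy_op S) (@e0 R G) x = (nu S ^+ t) x.
Proof.
move=> hS hd; elim: t => [|t IH] x.
  by rewrite expr0 goneE /e0 /=; case: (x == 0).
rewrite iterS lazy_nu //.
have -> : [ffun y => iter t (lazy_op S) (@e0 R G) y] = nu S ^+ t.
  by apply/ffunP => y; rewrite ffunE IH.
by rewrite exprS.
Qed.

End Final.

Theorem lemma4p4 (R : realType) (G : finZmodType) (S : seq G) (d : nat)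
    (hS : symmetric_mset S) (hd : size S = d) (hd0 : (0 < d)%N) (t : nat) :
  CP R S t / CP R S (2 * t) <= (2 * expR 1) ^+ (4 * d).
Proof.
have hpos : (0 < size S)%N by rewrite hd.
have hne : S != [::] by case: S hpos {hS hd}.
have CPe n : CP R S n = \sum_x ((nu R S ^+ n) x) ^+ 2.
  by rewrite /CP; apply: eq_bigr => x _; rewrite iter_nu.
have hdb := Hdouble (nng_nu R S) (Hnu R hne).
rewrite hd in hdb.
set K : R := ((2 ^ d)%:R) ^+ 2.
have key : CP R S t <= K * CP R S (2 * t).
  rewrite !CPe mulr_sumr mul2n -addnn.
  apply: ler_sum => x _.
  have a0 : 0 <= (nu R S ^+ t) x by apply: nngX; apply: nng_nu.
  have h := hdb t x.
  rewrite /K -exprMn.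
  by rewrite lerXn2r // ?nnegrE // (le_trans a0 h).
have K0 : 0 <= K by rewrite /K exprn_ge0.
have e1 : 1 <= expR 1 :> R by have := expR_ge1Dx (1 : R); lra.
have hK : K <= (2 * expR 1) ^+ (4 * d).
  rewrite /K natrX -exprM.
  apply: (@le_trans _ _ (2 ^+ (4 * d))).
    by apply: ler_weXn2l; rewrite ?ler1n //; lia.
  by rewrite lerXn2r // ?nnegrE //; lra.
have c0 : 0 <= CP R S (2 * t).
  by rewrite CPe sumr_ge0 // => x _; rewrite sqr_ge0.
case: (eqVneq (CP R S (2 * t)) 0) => [->|hne0].
  by rewrite invr0 mulr0 exprn_ge0 //; lra.
have cp : 0 < CP R S (2 * t) by rewrite lt_neqAle eq_sym hne0 c0.
rewrite ler_pdivrMr //.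
by apply: le_trans key _; rewrite ler_pM2r.
Qed.
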